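(* Let $A$ be a real $n\times n$ matrix with strictly negative diagonal, sign matrix $\mathcal{E}_A=(\epsilon_{ij})$, connectivity graph $G_A$ and clique complex $X(G_A)$. Suppose (i) $\epsilon_{ij}\epsilon_{ji}=1$ whenever $\{i,j\}$ ($i\neq j$) is a clique of $X(G_A)$; (ii) $\epsilon_{ij}\epsilon_{jk}\epsilon_{ki}=-1$ whenever $\{i,j,k\}$ (distinct) is a clique of $X(G_A)$; and (iii) $H^1(X(G_A);\mathbb{Z}_2)=0$. Then $A$ is a bipartite matrix.
   Context: The sign matrix $\mathcal{E}_A=(\epsilon_{ij})$ has $\epsilon_{ij}\in\{1,-1,0\}$ equal to the sign of $A_{ij}$. The connectivity graph $G_A$ is the simple graph on $\{1,\dots,n\}$ containing edge $(ij)$, $i\ne j$, unless $A_{ij}=A_{ji}=0$. $X(G_A)$ is its clique complex: the abstract simplicial complex whose simplices are the cliques (sets of pairwise adjacent vertices); cohomology is simplicial cohomology. A real $n\times n$ matrix $A$ is bipartite if $\{1,\dots,n\}$ can be partitioned into disjoint sets $\sigma,\bar\sigma$ such that: if $i\in\sigma,j\in\bar\sigma$ then $A_{ij}\ge0$ and $A_{ji}\ge0$; and if $i,j\in\sigma$ or $i,j\in\bar\sigma$ then $A_{ij}\le0$ and $A_{ji}\le0$. *)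

(* Defs.v *)
From HB Require Import structures.
From mathcomp Require Import all_boot all_order all_algebra.
Set Implicit Arguments. Unset Strict Implicit. Unset Printing Implicit Defensive.
Import Order.TTheory GRing.Theory Num.Theory.
Local Open Scope ring_scope.

Section Defs.
Variables (R : realFieldType) (n : nat).

Definition eps (A : 'M[R]_n) (i j : 'I_n) : R := Num.sg (A i j).

Definition adjA (A : 'M[R]_n) (i j : 'I_n) : bool :=
  (i != j) && ((A i j != 0) || (A j i != 0)).

(* cliques of G_A = simplices of the clique complex X(G_A) *)
Definition clique (A : 'M[R]_n) (s : {set 'I_n}) : bool :=
  [forall i in s, forall j in s, (i != j) ==> adjA A i j].

Definition simplex (A : 'M[R]_n) (k : nat) (s : {set 'I_n}) : bool :=
  clique A s && (#|s| == k.+1)%N.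

(* Z_2-valued cochains: functions on vertex sets (only values on simplices
   matter). Simplicial coboundary with Z_2 coefficients (signs irrelevant):
   (delta c)(s) = sum over codimension-one faces s \ {v}. *)
Definition coboundary (c : {set 'I_n} -> 'Z_2) (s : {set 'I_n}) : 'Z_2 :=
  \sum_(v in s) c (s :\ v).

Definition H1_Z2_trivial (A : 'M[R]_n) : Prop :=
  forall c : {set 'I_n} -> 'Z_2,
    (forall s, simplex A 2 s -> coboundary c s = 0) ->
    exists f : {set 'I_n} -> 'Z_2,
      forall s, simplex A 1 s -> c s = coboundary f s.

Definition bipartite (A : 'M[R]_n) : Prop :=
  exists sigma : {set 'I_n},
    forall i j : 'I_n,
      ((i \in sigma) != (j \in sigma) -> 0 <= A i j /\ 0 <= A j i) /\
      ((i \in sigma) = (j \in sigma) -> A i j <= 0 /\ A j i <= 0).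

End Defs.

(* Main.v *)
Require Import Defs.
From HB Require Import structures.
From mathcomp Require Import all_boot all_order all_algebra.
Import Order.TTheory GRing.Theory Num.Theory.
Local Open Scope ring_scope.

Lemma Z2_eq (a b : bool) : (a%:R : 'Z_2) = b%:R -> a = b.
Proof. by case: a; case: b => // /eqP. Qed.

Lemma Z2_bit (x : 'Z_2) : x = (x == 1)%:R.
Proof.
move: x; change (forall x : 'I_2, x = (x == 1)%:R :> 'Z_2).
by case=> [[|[|m]] //] Hm; apply/val_inj.
Qed.

Set Implicit Arguments.
Section Helpers.
Variables (R : realFieldType) (n : nat) (A : 'M[R]_n).

Lemma adjA_sym i j : adjA A i j = adjA A j i.
Proof. by rewrite /adjA eq_sym orbC. Qed.

Lemma clique_pair i j : adjA A i j -> clique A [set i; j].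
Proof.
move=> h; apply/forallP => x; apply/implyP; rewrite !inE => hx.
apply/forallP => y; apply/implyP; rewrite !inE => hy; apply/implyP.
case/orP: hx => /eqP ->; case/orP: hy => /eqP -> //; rewrite ?eqxx //.
by rewrite adjA_sym.
Qed.

Lemma clique_sub s i j : clique A s -> i \in s -> j \in s -> i != j -> adjA A i j.
Proof.
move=> H hi hj hij.
by have := forallP H i; rewrite hi /= => /forallP/(_ j); rewrite hj hij.
Qed.

Lemma sg_pair (a b : R) : Num.sg a * Num.sg b = 1 ->
  a != 0 /\ (0 < b) = (0 < a).
Proof.
rewrite -sgrM => /eqP; rewrite sgr_cp0 => h.
case: (ltrgtP 0 a) => ha /=.
- by rewrite pmulr_rgt0 in h.
- by rewrite nmulr_rgt0 // in h; split=> //; apply/negbTE; rewrite -leNgt ltW.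
- by rewrite -ha mul0r ltxx in h.
Qed.

Lemma sg_def (a : R) : a != 0 -> Num.sg a = if 0 < a then 1 else -1.
Proof.
move=> h; case: (ltrgtP 0 a) => ha; first by rewrite gtr0_sg.
  by rewrite ltr0_sg.
by rewrite -ha eqxx in h.
Qed.

Definition cc (s : {set 'I_n}) : 'Z_2 :=
  ([exists x in s, exists y in s, (x != y) && (0 < A x y)%R])%:R.

Lemma cc2 i j : i != j -> (0 < A j i) = (0 < A i j) ->
  cc [set i; j] = (0 < A i j)%R%:R.
Proof.
move=> hij hs; rewrite /cc; apply: (congr1 (fun b : bool => (b%:R : 'Z_2))); apply/idP/idP.
- case/exists_inP => x; rewrite !inE => hx /exists_inP [y]; rewrite !inE => hy.
  case/orP: hx => /eqP ->; case/orP: hy => /eqP ->; rewrite ?eqxx //= => /andP[_] //.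
  by rewrite hs.
- move=> h; apply/exists_inP; exists i; rewrite ?inE ?eqxx //.
  by apply/exists_inP; exists j; rewrite ?inE ?eqxx ?orbT // hij h.
Qed.

Lemma sum3 (F : 'I_n -> 'Z_2) i j k : i != j -> j != k -> i != k ->
  \sum_(v in [set i; j; k]) F v = F i + F j + F k.
Proof.
move=> hij hjk hik.
have -> : [set i; j; k] = i |: (j |: [set k]).
  by apply/setP => x; rewrite !inE orbA.
rewrite big_setU1 ?big_setU1 ?big_set1 /= ?addrA //.
- by rewrite !inE.
- by rewrite !inE negb_or hij hik.
Qed.

Lemma face3 (i j k : 'I_n) : i != j -> i != k -> [set i; j; k] :\ i = [set j; k].
Proof.
move=> hij hik; apply/setP => x; rewrite !inE.
by case: (eqVneq x i) => [->|] //=; rewrite (negbTE hij) (negbTE hik).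
Qed.

Lemma perm3a (i j k : 'I_n) : [set i; j; k] = [set j; i; k].
Proof. by apply/setP => x; rewrite !inE; case: (x == i); case: (x == j). Qed.
Lemma perm3b (i j k : 'I_n) : [set i; j; k] = [set k; i; j].
Proof. by apply/setP => x; rewrite !inE; case: (x == i); case: (x == j); case: (x == k). Qed.

End Helpers.
Unset Implicit Arguments.
Arguments cc {R n} A s.
Arguments clique_sub {R n A s i j}.
Arguments sum3 {n} F i j k.

Theorem mainTheorem7 (R : realFieldType) (n : nat) (A : 'M[R]_n) :
  (forall i : 'I_n, A i i < 0) ->
  (forall i j : 'I_n, i != j -> clique A [set i; j] ->
     eps A i j * eps A j i = 1) ->
  (forall i j k : 'I_n, i != j -> j != k -> i != k ->
     clique A [set i; j; k] ->
     eps A i j * eps A j k * eps A k i = -1) ->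
  H1_Z2_trivial A ->
  bipartite A.
Proof.
move=> Hd H2 H3 H1.
have Edge : forall i j, i != j -> adjA A i j ->
    A i j != 0 /\ (0 < A j i) = (0 < A i j).
  by move=> i j hij ha; apply: sg_pair; apply: H2 => //; apply: clique_pair.
have Eps : forall i j, i != j -> adjA A i j ->
    eps A i j = if 0 < A i j then 1 else -1.
  by move=> i j hij ha; rewrite /eps sg_def //; case: (Edge i j hij ha).
have CC : forall i j, i != j -> adjA A i j -> cc A [set i; j] = (0 < A i j)%R%:R.
  by move=> i j hij ha; apply: cc2 => //; case: (Edge i j hij ha).
have [f Hf] : exists f : {set 'I_n} -> 'Z_2,
    forall s, simplex A 1 s -> cc A s = coboundary f s.
  apply: H1 => s /andP [Hc Hs].
  have [x xs] : exists x, x \in s.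
    by apply/set0Pn; apply: contraTneq Hs => ->; rewrite cards0.
  have : #|s :\ x| == 2%N by rewrite (cardsD1 x s) xs in Hs.
  case/cards2P => y [z [hyz hs']].
  have Es : s = [set x; y; z].
    rewrite -(setD1K xs) hs'; apply/setP => w; rewrite !inE.
    by case: (w == x); case: (w == y).
  have hxy : x != y.
    have : y \in s :\ x by rewrite hs' !inE eqxx.
    by rewrite !inE => /andP [h _]; rewrite eq_sym.
  have hxz : x != z.
    have : z \in s :\ x by rewrite hs' !inE eqxx orbT.
    by rewrite !inE => /andP [h _]; rewrite eq_sym.
  rewrite Es in Hc *.
  have a1 : adjA A x y by apply: (clique_sub Hc); rewrite ?inE ?eqxx ?orbT.
  have a2 : adjA A y z by apply: (clique_sub Hc); rewrite ?inE ?eqxx ?orbT.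
  have a3 : adjA A z x by apply: (clique_sub Hc); rewrite ?inE ?eqxx ?orbT // eq_sym.
  have := H3 x y z hxy hyz hxz Hc.
  rewrite (Eps _ _ hxy a1) (Eps _ _ hyz a2) (Eps z x) ?(eq_sym z) // => Ht.
  rewrite /coboundary sum3 // face3 // perm3a face3 // ?(eq_sym y) //.
  rewrite perm3b face3 // ?(eq_sym z) //.
  have a3' : adjA A x z by rewrite adjA_sym.
  have a1' : adjA A y x by rewrite adjA_sym.
  rewrite (CC y z) // (CC x z) // (CC y x) ?(eq_sym y) //.
  rewrite (proj2 (Edge _ _ hxy a1)) -(proj2 (Edge _ _ hxz a3')).
  move: Ht; case: (0 < A x y); case: (0 < A y z); case: (0 < A z x) => /=; rewrite ?mulr1 ?mulrNN ?mulr1 ?mulN1r ?mulrN1 ?opprK ?mul1r //.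
  all: try by move=> h; exfalso; have := @ltrN10 R; rewrite -h ltr10.
  all: try by move=> _; apply/val_inj.
set sig := [set x | f [set x] == 1].
exists sig => i j.
case: (eqVneq i j) => [<-|hij].
  split; first by rewrite eqxx.
  by move=> _; split; apply: ltW.
case: (boolP (adjA A i j)) => ha; last first.
  move: ha; rewrite /adjA hij /= negb_or !negbK => /andP[/eqP -> /eqP ->].
  by split => _; split.
have [nz ps] := Edge i j hij ha.
have hs : simplex A 1 [set i; j] by rewrite /simplex clique_pair // cards2 hij.
have := Hf _ hs; rewrite (CC i j) // /coboundary.
rewrite big_setU1 ?big_set1 ?inE //=.
rewrite setU1K ?inE //.
have -> : (i |: [set j]) :\ j = [set i].
  apply/setP => w; rewrite !inE; case: (eqVneq w j) => [->|] /=.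
    by rewrite eq_sym (negbTE hij) ?orbF.
  by rewrite ?orbF.
move=> h.
have key : (0 < A i j) = ((f [set i] == 1) != (f [set j] == 1)).
{
  move: h; rewrite (Z2_bit (f [set j])) (Z2_bit (f [set i])).
  case: (f [set j] == 1); case: (f [set i] == 1); case: (0 < A i j) => /=.
  all: by move=> h; apply/Z2_eq; rewrite h; apply/val_inj. }
split.
  move=> hd; rewrite -key in hd; split; apply: ltW => //; by rewrite ps.
move=> he; have hn : (0 < A i j) = false by rewrite key he eqxx.
by split; rewrite leNgt ?ps hn.
Qed.
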